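(* Let $R$ be a commutative ring and $\mathfrak{a}\subseteq R$ an ideal. If $\Gamma_\mathfrak{a}$ commutes with inductive limits (all small colimits), then $\Gamma_\mathfrak{a}$ is a radical and $R=\Gamma_\mathfrak{a}(R)+\mathfrak{a}$.
   Context: $\Gamma_\mathfrak{a}(M)=\{x\in M\mid \exists n\in\mathbb{N}:\mathfrak{a}^n\subseteq(0:_Rx)\}$. A radical is a subfunctor $F$ of the identity functor on $R$-modules with $F(M/F(M))=0$ for every $R$-module $M$. *)

(* Defs.v *)
From HB Require Import structures.
From mathcomp Require Import all_boot all_order all_algebra.
From Stdlib Require Import ClassicalEpsilon.
Set Implicit Arguments. Unset Strict Implicit. Unset Printing Implicit Defensive.
Import Order.TTheory GRing.Theory Num.Theory.
Local Open Scope ring_scope.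

Definition is_ideal (R : comPzRingType) (a : R -> Prop) : Prop :=
  [/\ a 0, (forall x y, a x -> a y -> a (x + y)) & (forall r x, a x -> a (r * x))].

(* Membership in the power ideal a^n: a^0 = R, and a^(n+1) = a * a^n is the
   ideal product, i.e. the set of finite sums of products x*y, x in a, y in a^n. *)
Inductive ipow (R : comPzRingType) (a : R -> Prop) : nat -> R -> Prop :=
  | ipow0 : forall r, ipow a 0 r
  | ipowM : forall n x y, a x -> ipow a n y -> ipow a n.+1 (x * y)
  | ipowZ : forall n, ipow a n.+1 0
  | ipowD : forall n u v, ipow a n.+1 u -> ipow a n.+1 v -> ipow a n.+1 (u + v).

Lemma ipow_mull (R : comPzRingType) (a : R -> Prop) n r y :
  ipow a n y -> ipow a n (r * y).
Proof.
elim=> {n y} [s|n x y ax _ IH|n|n u v _ IHu _ IHv].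
- exact: ipow0.
- by rewrite mulrCA; apply: ipowM.
- by rewrite mulr0; apply: ipowZ.
- by rewrite mulrDr; apply: ipowD.
Qed.

Lemma ipowS_sub (R : comPzRingType) (a : R -> Prop) n r :
  ipow a n.+1 r -> ipow a n r.
Proof.
move Em : n.+1 => m H; elim: H n Em => //.
- move=> k x y ax Hy _ n [Ek]; subst.
  exact: ipow_mull.
- move=> k n [Ek]; subst.
  by case: (k) => [|j]; [apply: ipow0|apply: ipowZ].
- move=> k u v _ IHu _ IHv n [Ek]; subst.
  case: k IHu IHv => [|j] IHu IHv; first exact: ipow0.
  by apply: ipowD; [apply: IHu|apply: IHv].
Qed.

Lemma ipow_le (R : comPzRingType) (a : R -> Prop) m n r :
  (m <= n)%N -> ipow a n r -> ipow a m r.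
Proof.
move=> le; elim: n le r => [|n IH] le r H.
  by move: le; rewrite leqn0 => /eqP ->.
move: le; rewrite leq_eqVlt => /orP[/eqP -> //|lt].
by apply: IH => //; apply: ipowS_sub.
Qed.

Section Gamma.
Variables (R : comPzRingType) (a : R -> Prop).

Definition gam_prop (M : lmodType R) (x : M) : Prop :=
  exists n : nat, forall r, ipow a n r -> r *: x = 0.

Definition gam (M : lmodType R) : {pred M} :=
  fun x => if excluded_middle_informative (gam_prop x) then true else false.
Arguments gam M : clear implicits.

Lemma gamP (M : lmodType R) (x : M) : reflect (gam_prop x) (x \in gam M).
Proof.
rewrite /in_mem /= /gam; case: excluded_middle_informative => H.
- by apply: ReflectT.
- by apply: ReflectF.
Qed.

Lemma gam_submod_closed (M : lmodType R) : submod_closed (gam M).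
Proof.
split; first by apply/gamP; exists 0%N => r _; rewrite scaler0.
move=> c u v /gamP[n Hn] /gamP[m Hm]; apply/gamP; exists (maxn n m) => r Hr.
rewrite scalerDr scalerA mulrC -scalerA Hn ?Hm ?scaler0 ?addr0 //.
- by apply: ipow_le Hr; rewrite leq_maxr.
- by apply: ipow_le Hr; rewrite leq_maxl.
Qed.

Record gamT (M : lmodType R) := GamT { gval : M; gvalP : gval \in gam M }.

Section GamTInst.
Variable M : lmodType R.
HB.instance Definition _ := [isSub for @gval M].
HB.instance Definition _ := [Choice of gamT M by <:].
HB.instance Definition _ := GRing.SubChoice_isSubLmodule.Build R M (gam M) (gamT M)
  (GRing.submod_closed_semi (gam_submod_closed M)).
End GamTInst.

Lemma gam_map_in (M N : lmodType R) (f : M -> N) (hf : linear f) (x : M) :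
  x \in gam M -> f x \in gam N.
Proof.
have f0 : f 0 = 0.
  by have := hf (-1) 0 0; rewrite scaler0 add0r scaleN1r addNr.
move=> /gamP[n Hn]; apply/gamP; exists n => r Hr.
by move: (hf r x 0); rewrite addr0 f0 addr0 Hn // f0 => <-.
Qed.

Definition gam_map (M N : lmodType R) (f : M -> N) (hf : linear f)
  (x : gamT M) : gamT N := GamT (gam_map_in hf (gvalP x)).

End Gamma.
Arguments gam {R} a M.
Arguments gamT {R} a M.

Record category := Category {
  Ob : Type;
  Hom : Ob -> Ob -> Type;
  idm : forall i, Hom i i;
  comp : forall i j k, Hom j k -> Hom i j -> Hom i k;
  comp_id_l : forall i j (f : Hom i j), comp (idm j) f = f;
  comp_id_r : forall i j (f : Hom i j), comp f (idm i) = f;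
  comp_assoc : forall i j k l (f : Hom i j) (g : Hom j k) (h : Hom k l),
      comp h (comp g f) = comp (comp h g) f
}.

Section Diagrams.
Variable R : comPzRingType.

Record diagram (C : category) := Diagram {
  dob : Ob C -> lmodType R;
  dmap : forall i j, Hom i j -> dob i -> dob j;
  dmap_lin : forall i j (f : Hom i j), linear (dmap f);
  dmap_id : forall i x, dmap (idm i) x = x;
  dmap_comp : forall i j k (f : @Hom C i j) (g : @Hom C j k) x,
      dmap (comp g f) x = dmap g (dmap f x)
}.

Definition is_cocone (C : category) (F : Ob C -> lmodType R)
    (Fm : forall i j, @Hom C i j -> F i -> F j)
    (L : lmodType R) (c : forall i, F i -> L) : Prop :=
  (forall i, linear (c i)) /\
  (forall i j (f : @Hom C i j) x, c j (Fm i j f x) = c i x).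

Definition is_colimit (C : category) (F : Ob C -> lmodType R)
    (Fm : forall i j, @Hom C i j -> F i -> F j)
    (L : lmodType R) (c : forall i, F i -> L) : Prop :=
  is_cocone Fm c /\
  forall (N : lmodType R) (k : forall i, F i -> N), is_cocone Fm k ->
    exists u : L -> N,
      (linear u /\ forall i x, u (c i x) = k i x) /\
      forall u' : L -> N, linear u' -> (forall i x, u' (c i x) = k i x) ->
        forall y, u' y = u y.

End Diagrams.

Definition gam_commutes_colimits (R : comPzRingType) (a : R -> Prop) : Prop :=
  forall (C : category) (D : diagram R C) (L : lmodType R)
         (c : forall i, dob D i -> L) (hc : forall i, linear (c i)),
    is_colimit (@dmap R C D) c ->
    is_colimit (fun i j (f : @Hom C i j) => gam_map (a := a) (@dmap_lin R C D i j f))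
               (fun i => gam_map (a := a) (hc i)).

(* Gamma_a is a radical: a subfunctor of the identity functor on R-modules
   (Gamma_a(M) is a submodule of M and linear maps send Gamma_a(M) into
   Gamma_a(N)) with Gamma_a(M / Gamma_a(M)) = 0 for every R-module M.
   The last condition is written out on representatives: the class of x in
   M/Gamma_a(M) lies in Gamma_a(M/Gamma_a(M)), i.e. a^n x \subseteq Gamma_a(M)
   for some n, only if that class is zero, i.e. x \in Gamma_a(M). *)
Definition gam_is_radical (R : comPzRingType) (a : R -> Prop) : Prop :=
  (forall M : lmodType R, submod_closed (gam a M)) /\
  (forall (M N : lmodType R) (f : M -> N), linear f ->
     forall x, x \in gam a M -> f x \in gam a N) /\
  (forall (M : lmodType R) (x : M),
     (exists n : nat, forall r, ipow a n r -> r *: x \in gam a M) ->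
     x \in gam a M).

(* Main.v *)
Require Import Defs.
From HB Require Import structures.
From mathcomp Require Import all_boot all_order all_algebra.
From Stdlib Require Import ClassicalEpsilon.
Import GRing.Theory.
Local Open Scope ring_scope.
Local Open Scope quotient_scope.
Set Implicit Arguments. Unset Strict Implicit.

Section QuotMod.
Variables (R : comPzRingType) (V : lmodType R) (P : {pred V}) (hP : submod_closed P).
Definition Pk : {pred V} := P.
HB.instance Definition _ := GRing.isZmodClosed.Build V Pk (GRing.submod_closedB hP).
Definition I : GRing.ZmodClosed.type V := GRing.ZmodClosed.clone V Pk _.
Definition Q := Quotient.quot I.
Definition pi : V -> Q := \pi_Q.
Lemma piP (x y : V) : (pi x = pi y) <-> x - y \in P.
Proof. have := @Quotient.idealrBE V I x y. rewrite /pi /Q => ->.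
split; [by move=>->| by move/eqP]. Qed.
Lemma pi_add x y : pi (x + y) = pi x + pi y.
Proof. exact: (@Quotient.pi_add V I x y). Qed.
Lemma pi0 : pi 0 = 0.
Proof. exact: (raddf0 (\pi_Q : V -> Q)). Qed.
Lemma pi_surj (q : Q) : pi (repr q) = q.
Proof. exact: reprK. Qed.
Lemma PZ r x : x \in P -> r *: x \in P.
Proof. move=> Px; case: hP => P0 Hl; by have := Hl r x 0 Px P0; rewrite addr0. Qed.
Lemma PB x y : x \in P -> y \in P -> x - y \in P.
Proof. move=> Px Py. have : x - y \in Pk by apply: rpredB. by []. Qed.
Lemma pi0P x : pi x = 0 <-> x \in P.
Proof. by rewrite -pi0 piP subr0. Qed.
Definition qscale (r : R) (q : Q) : Q := pi (r *: repr q).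
Lemma pi_scale r x : pi (r *: x) = qscale r (pi x).
Proof. apply/piP; rewrite -scalerBr; apply: PZ; apply/piP; by rewrite pi_surj. Qed.
Lemma qscaleA a b v : qscale a (qscale b v) = qscale (a * b) v.
Proof. by rewrite -[v]pi_surj -!pi_scale scalerA. Qed.
Lemma qscale1 : left_id 1 qscale.
Proof. by move=> v; rewrite -[v]pi_surj -!pi_scale scale1r. Qed.
Lemma qscaleDr : right_distributive qscale +%R.
Proof. by move=> a u v; rewrite -[u]pi_surj -[v]pi_surj -pi_add -!pi_scale scalerDr pi_add. Qed.
Lemma qscaleDl v : {morph qscale^~ v: a b / a + b}.
Proof. by move=> a b; rewrite -[v]pi_surj -!pi_scale scalerDl pi_add. Qed.
HB.instance Definition _ := GRing.Zmodule.on Q.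
HB.instance Definition _ := GRing.Zmodule_isLmodule.Build R Q qscaleA qscale1 qscaleDr qscaleDl.
Lemma pi_lin : linear pi.
Proof. by move=> r x y; rewrite pi_add pi_scale. Qed.
End QuotMod.
Section Shape.
Variable J : Type.
Definition hcond (i j : bool) (f : option J) : bool :=
  if i then j && ~~ isSome f else j || ~~ isSome f.
Definition HH (i j : bool) := {f : option J | hcond i j f}.
Definition hid (i : bool) : HH i i := @exist _ (fun f => hcond i i f) None ltac:(by case: i).
Lemma hcomp_ok i j k (h : HH j k) (e : HH i j) :
  hcond i k (if isSome (sval h) then sval h else sval e).
Proof.
case: h e => [[x|] hh] [[y|] he]; case: i j k hh he => [] [] [] //=.
Qed.
Definition hcomp i j k (h : HH j k) (e : HH i j) : HH i k := @exist _ (fun f => hcond i k f) _ (hcomp_ok h e).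
Lemma hid_l i j (f : HH i j) : hcomp (hid j) f = f.
Proof. by apply: val_inj. Qed.
Lemma hid_r i j (f : HH i j) : hcomp f (hid i) = f.
Proof. apply: val_inj => /=; by case: (sval f). Qed.
Lemma hassoc i j k l (f : HH i j) (g : HH j k) (h : HH k l) :
  hcomp h (hcomp g f) = hcomp (hcomp h g) f.
Proof. apply: val_inj => /=; by case: (sval h) => //; case: (sval g). Qed.
Definition Cshape := @Category bool HH hid hcomp hid_l hid_r hassoc.
End Shape.
Lemma lin0 (R : comPzRingType) (U W : lmodType R) (f : U -> W) : linear f -> f 0 = 0.
Proof. by move=> hf; have := hf (-1) 0 0; rewrite scaler0 add0r scaleN1r addNr. Qed.
Lemma linB (R : comPzRingType) (U W : lmodType R) (f : U -> W) : linear f ->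
  forall x y, f (x - y) = f x - f y.
Proof. move=> hf x y; have := hf (-1) y x. rewrite !scaleN1r addrC => <-. by rewrite addrC. Qed.

Section Diag.
Variables (R : comPzRingType) (M K : lmodType R) (J : Type) (g : J -> K -> M)
  (glin : forall t, linear (g t)).
Definition dob (i : bool) : lmodType R := if i then M else K.
Definition dm (i j : bool) : HH J i j -> dob i -> dob j :=
  match i as i0, j as j0 return HH J i0 j0 -> dob i0 -> dob j0 with
  | false, false => fun _ x => x
  | false, true => fun f x => match sval f with Some t => g t x | None => 0 end
  | true, true => fun _ x => x
  | true, false => fun _ _ => 0
  end.
Lemma dm_lin i j (f : HH J i j) : linear (dm f).
Proof.
case: i j f => [] [] f r x y //=; rewrite ?scaler0 ?addr0 //.
case: (sval f) => [t|]; rewrite ?scaler0 ?addr0 //; exact: glin.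
Qed.
Lemma dm_id i x : dm (hid J i) x = x.
Proof. by case: i x. Qed.
Lemma dm_comp i j k (f : HH J i j) (h : HH J j k) x :
  dm (hcomp h f) x = dm h (dm f x).
Proof.
case: f h => [f hf] [h hh].
case: i j k hf hh x => [] [] [] //=; case: f => [?|]; case: h => [?|] //= _ _ x;
 rewrite ?lin0 //.
Qed.
Definition Dg := @Diagram R (Cshape J) dob dm dm_lin dm_id dm_comp.
End Diag.
Section Key.
Variables (R : comPzRingType) (M K : lmodType R) (J : Type) (g : J -> K -> M)
  (glin : forall t, linear (g t)).
Variables (P : {pred M}) (hP : submod_closed P)
  (gP : forall t x, g t x \in P) (Pg : forall y, y \in P -> exists t x, y = g t x).

Definition cc (i : bool) : dob M K i -> Q hP :=
  match i as i0 return dob M K i0 -> Q hP with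
  | true => pi hP
  | false => fun _ => 0
  end.
Arguments cc i : clear implicits.
Lemma cc_lin i : linear (cc i).
Proof. case: i => r x y /=; last by rewrite scaler0 addr0. exact: pi_lin. Qed.

Lemma cc_colim : is_colimit (@dmap R _ (Dg glin)) cc.
Proof.
split.
  split; first exact: cc_lin.
  move=> i j [f hf] x; case: i j hf x => [] [] //= hf x.
  case: f hf => [t|] _ /=; last exact: pi0.
  by apply/pi0P.
move=> N k [klin kc].
pose k1 := k true : M -> N.
have k1P : forall y, y \in P -> k1 y = 0.
  move=> y /Pg[t [x ->]].
  have e1 := kc false true (@exist _ (fun f => hcond false true f) (Some t) isT) x.
  have e0 := kc false true (@exist _ (fun f => hcond false true f) None isT) x.
  rewrite /= in e1 e0. rewrite /k1 e1 -e0. exact: (lin0 (klin true)).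
have k1E : forall x y, pi hP x = pi hP y -> k1 x = k1 y.
  move=> x y /piP /k1P; rewrite /k1 (linB (klin true)) => /eqP; rewrite subr_eq0 => /eqP //.
have k0 : forall x, k false x = 0.
  move=> x.
  have e0 := kc false true (@exist _ (fun f => hcond false true f) None isT) x.
  rewrite /= in e0. rewrite -e0. exact: (lin0 (klin true)).
exists (fun q => k1 (repr q)); split.
  split.
    move=> r q1 q2 /=. rewrite /k1 -(klin true). apply: k1E.
    by rewrite pi_lin !pi_surj.
  case=> x /=.
    by apply: k1E; rewrite pi_surj.
  rewrite k0 -pi0 (k1E _ _ (pi_surj _)). exact: (lin0 (klin true)).
move=> u' u'lin u'E y.
by rewrite -{1}(pi_surj y) (u'E true).
Qed.
Lemma key (a : R -> Prop) (Hc : gam_commutes_colimits a) (q : Q hP) :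
  q \in gam a (Q hP) -> exists m, m \in gam a M /\ pi hP m = q.
Proof.
move=> hq.
have [_ univ] := Hc (Cshape J) (Dg glin) (Q hP) cc cc_lin cc_colim.
pose imP : {pred gamT a (Q hP)} := fun y =>
  if excluded_middle_informative (exists m : gamT a M, gam_map (@cc_lin true) m = y)
  then true else false.
have imPP y : reflect (exists m : gamT a M, gam_map (@cc_lin true) m = y) (y \in imP).
  rewrite /in_mem /= /imP; case: excluded_middle_informative => H.
  - by apply: ReflectT.
  - by apply: ReflectF.
have himP : submod_closed imP.
  split.
    apply/imPP; exists 0; apply: val_inj => /=. by rewrite pi0.
  move=> r y1 y2 /imPP[m1 <-] /imPP[m2 <-]; apply/imPP; exists (r *: m1 + m2).
  apply: val_inj => /=. exact: pi_lin.
pose k : forall i, gamT a (dob M K i) -> Q himP := fun i _ => 0.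
have kco : is_cocone (fun i j (f : @Defs.Hom (Cshape J) i j) =>
   gam_map (a := a) (@dmap_lin R _ (Dg glin) i j f)) k.
  by split => // i r x y; rewrite /k scaler0 addr0.
have [u [_ uniq]] := univ (Q himP) k kco.
have H0 : forall i x, pi himP (gam_map (@cc_lin i) x) = k i x.
  move=> i x; rewrite /k; apply/pi0P/imPP; case: i x => x; first by exists x.
  exists 0; apply: val_inj => /=; by rewrite pi0.
have H1 : forall i x, (fun _ : gamT a (Q hP) => (0 : Q himP)) (gam_map (@cc_lin i) x) = k i x.
  by [].
have l1 : linear (fun _ : gamT a (Q hP) => (0 : Q himP)) by move=> r x y; rewrite scaler0 addr0.
have := uniq _ (pi_lin himP) H0 (GamT hq).
rewrite -(uniq _ l1 H1 (GamT hq)) => /pi0P /imPP [m /(congr1 (@gval _ _ _))] /= <-.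
exists (gval m); split => //; exact: gvalP.
Qed.
End Key.
Lemma ipow1 (R : comPzRingType) (a : R -> Prop) : is_ideal a ->
  forall n r, ipow a n r -> n = 1%N -> a r.
Proof.
move=> [a0 aD aM] n r H; elim: H => {n r} [r|n x y ax _ _|n|n u v _ IHu _ IHv] E.
- by [].
- by rewrite mulrC; apply: aM.
- exact: a0.
- by apply: aD; [exact: IHu|exact: IHv].
Qed.

Theorem proposition9p7 (R : comPzRingType) (a : R -> Prop) :
  is_ideal a ->
  gam_commutes_colimits a ->
  gam_is_radical a /\
  (forall z : R, exists g t : R,
      g \in gam a R^o /\ a t /\ z = g + t).
Proof.
move=> Ia Hc; split.
  split; first by move=> M; exact: gam_submod_closed.
  split; first by move=> M N f hf x; exact: gam_map_in.
  move=> M x [n Hn].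
  pose g (h : gamT a M) (r : R^o) : M := r *: gval h.
  have glin h : linear (g h).
    by move=> c r s; rewrite /g scalerDl scalerA.
  have hP := gam_submod_closed a M.
  have gP h r : g h r \in gam a M.
    by rewrite /g; apply: PZ => //; exact: gvalP.
  have Pg y : y \in gam a M -> exists h r, y = g h r.
    by move=> Hy; exists (GamT Hy), 1; rewrite /g scale1r.
  have Hq : pi hP x \in gam a (Q hP).
    apply/gamP; exists n => r Hr.
    have := pi_lin hP r x 0; rewrite addr0 pi0 addr0 => <-.
    by apply/pi0P; exact: Hn.
  have [m [Hm /piP Em]] := key glin gP Pg Hc Hq.
  have := PB hP Hm Em. by rewrite opprB addrC subrK.
move=> z.
pose A : {pred R^o} := fun x => if excluded_middle_informative (a x) then true else false.
have AP y : reflect (a y) (y \in A).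
  rewrite /in_mem /= /A; case: excluded_middle_informative => H.
  - by apply: ReflectT.
  - by apply: ReflectF.
case: (Ia) => a0 aD aM.
have hA : submod_closed A.
  split; first by apply/AP.
  by move=> r u v /AP au /AP av; apply/AP; apply: aD => //; apply: aM.
pose g (t : {t : R | a t}) (r : R^o) : R^o := r * sval t.
have glin t : linear (g t).
  by move=> c r s; rewrite /g mulrDl; congr (_ + _); symmetry; exact: mulrA.
have gP t r : g t r \in A.
  by apply/AP; rewrite /g; apply: aM; exact: (svalP t).
have Pg y : y \in A -> exists t r, y = g t r.
  by move=> /AP Hy; exists (exist _ y Hy), 1; rewrite /g mul1r.
have Hq : pi hA z \in gam a (Q hA).
  apply/gamP; exists 1%N => r Hr.
  have := pi_lin hA r z 0; rewrite addr0 pi0 addr0 => <-.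
  apply/pi0P/AP; have := aM z r (ipow1 Ia Hr erefl). by rewrite mulrC.
have [m [Hm /piP /AP Em]] := key glin gP Pg Hc Hq.
exists m, (z - m); split => //; split; last by rewrite addrC subrK.
have := aM (-1) _ Em. by rewrite mulN1r opprB.
Qed.
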